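(* Let $\mathbf A$ be an $L\times K$ binary matrix with full row rank, and consider any computing scheme that computes $\mathbf r=\mathbf s\mathbf A$ over $\mathbb F_2$ using a circuit built from gates of Gate Model I, each failing independently with error probability $\epsilon$, with maximum fan-in $D$. If the scheme achieves block error probability $P_e^{\text{blk}}=\Pr(\hat{\mathbf r}\ne\mathbf r)<p_{\text{tar}}$, then the number of operations per output bit satisfies $$\mathscr N_{\text{per-bit}}\ge\frac{L\log(1/p_{\text{tar}})}{KD\log(D/\epsilon)}=\Omega\!\left(\frac{L\log(1/p_{\text{tar}})}{K\log(1/\epsilon)}\right).$$
   Context: Gate Model I: each gate computes a deterministic Boolean function $g$ of $d_g\le D$ inputs and outputs $g(u_1,\dots,u_{d_g})\oplus z_g$ with $z_g\sim\mathrm{Bernoulli}(\epsilon)$, $\epsilon<1/2$, independently across gates and across uses. A noisy circuit has binary inputs $s_1,\dots,s_L$, such gates, and noiseless registers and wires; gate inputs can be circuit inputs, gate outputs or register outputs. The computation proceeds in a predetermined number of stages; in each stage some gates are activated and some registers updated, and the outputs are finally stored in registers. One operation is one activation of one gate; $\mathscr N_{\text{per-bit}}$ is the total number of operations divided by $K$. $\hat{\mathbf r}$ is the computed output. *)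

(* Defs.v *)
From HB Require Import structures.
From mathcomp Require Import all_boot all_order all_algebra.
From mathcomp Require Import reals exp.
Set Implicit Arguments. Unset Strict Implicit. Unset Printing Implicit Defensive.
Import Order.TTheory GRing.Theory Num.Theory.
Local Open Scope ring_scope.

(* A noisy circuit with L binary inputs, K outputs and N operations
   (gate activations), listed in the order in which they are performed.
   Operation i (0 <= i < N):
   - has fan-in [fanin C i];
   - computes the deterministic Boolean function [gfun C i] of its inputs
     (given as the sequence of the [fanin C i] input values), then XORs
     its own independent Bernoulli(eps) noise bit;
   - its j-th input wire reads [wire C i j] : either a circuit input
     [inl l] (l : 'I_L) or the (noiseless, possibly register-stored)
     output of an earlier operation [inr k] with k < i.
   Output bit k is the value stored in a register, i.e. the output of
   operation [outp C k]. *)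
Record circuit (L K N : nat) := Circuit {
  fanin : nat -> nat;
  gfun  : nat -> seq 'F_2 -> 'F_2;
  wire  : nat -> nat -> 'I_L + nat;
  outp  : 'I_K -> nat
}.

Definition wf_circuit (L K N D : nat) (C : circuit L K N) : Prop :=
  (forall i, (i < N)%N -> (fanin C i <= D)%N) /\
  (forall i j, (i < N)%N -> (j < fanin C i)%N ->
     match wire C i j with inl _ => True | inr k => (k < i)%N end) /\
  (forall k, (outp C k < N)%N).

Definition src_val (L : nat) (s : 'rV['F_2]_L) (acc : seq 'F_2)
  (w : 'I_L + nat) : 'F_2 :=
  match w with inl l => s 0 l | inr k => nth 0 acc k end.

Definition step L K N (C : circuit L K N) (s : 'rV['F_2]_L) (z : N.-tuple bool)
  (acc : seq 'F_2) (i : nat) : seq 'F_2 :=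
  rcons acc
    (gfun C i [seq src_val s acc (wire C i j) | j <- iota 0 (fanin C i)]
     + (nth false z i)%:R).

Definition op_values L K N (C : circuit L K N) (s : 'rV['F_2]_L)
  (z : N.-tuple bool) : seq 'F_2 :=
  foldl (step C s z) [::] (iota 0 N).

Definition circ_out L K N (C : circuit L K N) (s : 'rV['F_2]_L)
  (z : N.-tuple bool) : 'rV['F_2]_K :=
  \row_k nth 0 (op_values C s z) (outp C k).

Definition noise_prob (R : realType) (N : nat) (eps : R) (z : N.-tuple bool) : R :=
  \prod_(i < N) (if tnth z i then eps else 1 - eps).

Definition blk_err (R : realType) L K N (C : circuit L K N) (eps : R)
  (A : 'M['F_2]_(L, K)) (s : 'rV['F_2]_L) : R :=
  \sum_(z : N.-tuple bool | circ_out C s z != s *m A) noise_prob eps z.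

(* Main.v *)
Require Import Defs.
From HB Require Import structures.
From mathcomp Require Import all_boot all_order all_algebra.
From mathcomp Require Import reals exp.
From mathcomp Require Import ring lra.
Import Order.TTheory GRing.Theory Num.Theory.
Local Open Scope ring_scope.
Set Implicit Arguments. Unset Strict Implicit.

Section Circ.
Variables (L K N : nat) (C : circuit L K N) (s : 'rV['F_2]_L).

Definition vpre (z : N.-tuple bool) n := foldl (step C s z) [::] (iota 0 n).

Lemma vpreS z n : vpre z n.+1 = step C s z (vpre z n) n.
Proof. by rewrite /vpre -[n.+1]addn1 iotaD foldl_cat add0n. Qed.

Lemma size_vpre z n : size (vpre z n) = n.
Proof. by elim: n => [//|n IH]; rewrite vpreS /step size_rcons IH. Qed.

Lemma nth_vpre z n i : (i < n)%N -> nth 0 (vpre z n) i = nth 0 (vpre z i.+1) i.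
Proof.
elim: n => [//|n IH] lt; rewrite vpreS /step nth_rcons size_vpre.
case: ltnP => h; first by rewrite IH.
have -> : i = n by apply/eqP; rewrite eqn_leq h -ltnS lt.
by rewrite eqxx vpreS /step nth_rcons size_vpre ltnn eqxx.
Qed.

Lemma vpre_dep (z z' : N.-tuple bool) n : (forall i, (i < n)%N -> nth false z i = nth false z' i) ->
  vpre z n = vpre z' n.
Proof.
elim: n => [//|n IH] h; rewrite !vpreS /step IH ?h //.
by move=> i lt; apply: h; apply: ltnW.
Qed.

Lemma op_vpre z : op_values C s z = vpre z N.
Proof. by []. Qed.

End Circ.

Lemma F2f (x t : 'F_2) : (x + 1 != t) = ~~ (x != t).
Proof. by move: x t; do 2!case=> [[|[|//]]] ? //. Qed.
Lemma F2b (b : bool) : ((~~ b)%:R : 'F_2) = b%:R + 1.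
Proof. by case: b; apply/val_inj. Qed.

Definition flip N (o : 'I_N) (z : N.-tuple bool) : N.-tuple bool :=
  [tuple (if i == o then ~~ tnth z i else tnth z i) | i < N].

Lemma flipK N (o : 'I_N) : involutive (flip o).
Proof.
move=> z; apply: eq_from_tnth => i; rewrite !tnth_mktuple.
by case: eqP => //; rewrite negbK.
Qed.

Lemma flip_op L K N (C : circuit L K N) s (o : 'I_N) z :
  nth 0 (op_values C s (flip o z)) o = nth 0 (op_values C s z) o + 1.
Proof.
rewrite !op_vpre !(nth_vpre _ _ _ (ltn_ord o)) !vpreS /step !nth_rcons !size_vpre.
rewrite ltnn eqxx.
rewrite (@vpre_dep _ _ _ C s (flip o z) z); last first.
  move=> i lt; rewrite -!(tnth_nth false _ (Ordinal (ltn_trans lt (ltn_ord o)))).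
  rewrite tnth_mktuple; case: eqP => // /(congr1 val) /= E.
  by exfalso; move: (ltn_eqF lt); rewrite E eqxx.
rewrite -!(tnth_nth false _ o) tnth_mktuple eqxx F2b addrA //.
Qed.

Section Prob.
Variable R : realType.

Lemma sum_noise (N : nat) (eps : R) : \sum_(z : N.-tuple bool) noise_prob (N:=N) eps z = 1.
Proof.
rewrite (reindex (fun f : {ffun 'I_N -> bool} => [tuple f i | i < N])); last first.
  exists (fun z : N.-tuple bool => [ffun i => tnth z i]) => [f _|z _].
    by apply/ffunP => i; rewrite ffunE tnth_mktuple.
  by apply: eq_from_tnth => i; rewrite tnth_mktuple ffunE.
rewrite /noise_prob.
under eq_bigr => f _ do under eq_bigr => i _ do rewrite tnth_mktuple.
rewrite -(bigA_distr_bigA (fun (i : 'I_N) (b : bool) => if b then eps else 1 - eps)).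
by rewrite big1 // => i _; rewrite big_bool /= addrC subrK.
Qed.

Lemma noise_ge0 (N : nat) (eps : R) (z : N.-tuple bool) : 0 <= eps <= 1 -> 0 <= noise_prob eps z :> R.
Proof.
move=> /andP[e0 e1]; apply: prodr_ge0 => i _; case: (tnth z i) => //.
by rewrite subr_ge0.
Qed.

Lemma noise_flip (N : nat) (eps : R) (o : 'I_N) (z : N.-tuple bool) : 0 <= eps -> eps <= 1 - eps ->
  eps * noise_prob eps (flip o z) <= (1 - eps) * noise_prob eps z.
Proof.
move=> e0 e1; rewrite /noise_prob (bigD1 o) // [X in _ <= _ * X](bigD1 o) //= tnth_mktuple eqxx.
have -> : \prod_(i < N | i != o) (if tnth (flip o z) i then eps else 1 - eps) =
          \prod_(i < N | i != o) (if tnth z i then eps else 1 - eps).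
  by apply: eq_bigr => i /negPf ne; rewrite tnth_mktuple ne.
have P0 : 0 <= \prod_(i < N | i != o) (if tnth z i then eps else 1 - eps).
  by apply: prodr_ge0 => i _; case: (tnth z i) => //; lra.
rewrite !mulrA; apply: ler_wpM2r => //.
case: (tnth z o) => /=; first by rewrite mulrC.
have e2 : 0 <= 1 - eps - eps by rewrite subr_ge0.
have : 0 <= (1 - eps - eps) * (1 - eps + eps) by apply: mulr_ge0 => //; lra.
move=> h; rewrite -subr_ge0; apply: le_trans h _; rewrite le_eqVlt; apply/orP; left; apply/eqP; ring.
Qed.

End Prob.

Section Err.
Variable R : realType.

Lemma err_ge_eps L K N D (C : circuit L K N) (A : 'M['F_2]_(L, K)) (eps : R) s (k : 'I_K) :
  0 < eps -> eps < 1 / 2 -> wf_circuit D C -> eps <= blk_err C eps A s.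
Proof.
move=> e0 e1 [_ [_ Hout]].
pose o : 'I_N := Ordinal (Hout k).
pose wrong (z : N.-tuple bool) := circ_out C s z 0 k != (s *m A) 0 k.
have Hw z : wrong (flip o z) = ~~ wrong z.
  by rewrite /wrong !mxE (flip_op C s o z) F2f.
pose E := \sum_(z | wrong z) noise_prob eps z.
have HE : E <= blk_err C eps A s.
  rewrite /E /blk_err [X in X <= _]big_mkcond [X in _ <= X]big_mkcond /=.
  apply: ler_sum => z _; case: ifP => w; last first.
    by case: ifP => _ //; apply: noise_ge0; apply/andP; split; lra.
  suff -> : circ_out C s z != s *m A by [].
  by apply/negP => /eqP E'; move: w; rewrite /wrong E' eqxx.
have Hsum : E + \sum_(z | ~~ wrong z) noise_prob eps z = 1.
  by have := sum_noise N eps; rewrite (bigID wrong) /=.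
have Hr : \sum_(z | ~~ wrong z) noise_prob eps z =
          \sum_(z | wrong z) noise_prob eps (flip o z).
  rewrite (reindex_inj (inv_inj (@flipK N o))) /=.
  by apply: eq_bigl => z; rewrite Hw negbK.
have Hle : eps * \sum_(z | wrong z) noise_prob eps (flip o z) <= (1 - eps) * E.
  rewrite /E !mulr_sumr; apply: ler_sum => z _; apply: noise_flip; lra.
rewrite -Hr in Hle.
apply: le_trans HE; nra.
Qed.

Lemma all_err L K N D (C : circuit L K N) (A : 'M['F_2]_(L, K)) (eps : R) :
  \rank A = L -> wf_circuit D C -> (N < L)%N ->
  exists s, blk_err C eps A s = 1.
Proof.
move=> rk [_ [_ Hout]] NL.
pose Fo (x : N.-tuple 'F_2) : 'rV['F_2]_K := \row_k nth 0 (x : seq 'F_2) (outp C k).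
have HF s z : circ_out C s z = Fo [tuple nth 0 (op_values C s z) i | i < N].
  apply/rowP => k; rewrite !mxE.
  by rewrite -(tnth_nth 0 _ (Ordinal (Hout k))) tnth_mktuple.
case/boolP: [exists s, [forall z, circ_out C s z != s *m A]].
  case/existsP => s /forallP H; exists s.
  rewrite /blk_err (eq_bigl xpredT) ?sum_noise // => z; exact: H.
rewrite negb_exists => /forallP H.
have sub : [set s *m A | s in [set: 'rV['F_2]_L]] \subset [set Fo x | x in [set: N.-tuple 'F_2]].
  apply/subsetP => y /imsetP [s _ ->].
  move: (H s); rewrite negb_forall => /existsP [z]; rewrite negbK => /eqP <-.
  by rewrite HF; apply: imset_f.
have := subset_leq_card sub.
rewrite card_imset; last by apply: row_free_inj; rewrite /row_free rk.
move=> h; have := leq_trans h (leq_imset_card _ _).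
rewrite !cardsT card_mx card_tuple card_Fp // mul1n leqNgt ltn_exp2l //.
by rewrite NL.
Qed.

End Err.
Unset Implicit Arguments.

Theorem theorem4 (R : realType) (L K D N : nat) (A : 'M['F_2]_(L, K))
    (eps ptar : R) (C : circuit L K N) :
  \rank A = L ->
  (1 <= D)%N ->
  0 < eps -> eps < 1 / 2 ->
  wf_circuit D C ->
  (forall s : 'rV['F_2]_L, blk_err C eps A s < ptar) ->
  (L%:R * ln (ptar^-1)) / (K%:R * D%:R * ln (D%:R / eps)) <= N%:R / K%:R.
Proof.
move=> rk D1 e0 e1 wf Hp.
have [K0|Kn0] := eqVneq K 0%N.
  by rewrite K0 (_ : (0%:R : R) = 0) // !mul0r invr0 !mulr0.
have Kpos : (0 < K)%N by rewrite lt0n.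
have pe : eps < ptar.
  exact: le_lt_trans (err_ge_eps A 0 (Ordinal Kpos) e0 e1 wf) (Hp 0).
have p0 : 0 < ptar by apply: lt_trans pe.
have D1r : (1 : R) <= D%:R by rewrite ler1n.
have Dpos : (0 : R) < D%:R by apply: lt_le_trans D1r.
have Kr : (0 : R) < K%:R by rewrite ltr0n.
have epsD : 1 < D%:R / eps.
  rewrite ltr_pdivlMr //; apply: lt_le_trans D1r; lra.
set a := ln (D%:R / eps).
have a0 : 0 < a by apply: ln_gt0.
have hl : ln (ptar^-1) <= a.
  rewrite /a ler_ln ?posrE ?invr_gt0 ?divr_gt0 //.
  apply: le_trans (_ : eps^-1 <= _).
    by rewrite lef_pV2 ?posrE // ltW.
  rewrite mulrC ler_peMr //; by rewrite invr_ge0 ltW.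
rewrite ler_pdivrMr; last by rewrite !mulr_gt0.
have -> : N%:R / K%:R * (K%:R * D%:R * a) = N%:R * D%:R * a.
  by field; rewrite pnatr_eq0.
have NDa : 0 <= N%:R * D%:R * a by rewrite !mulr_ge0 // ltW.
have [LN|NL] := leqP L N.
  have LNr : (L%:R : R) <= N%:R by rewrite ler_nat.
  apply: le_trans (_ : L%:R * a <= _).
    by rewrite ler_wpM2l.
  apply: le_trans (_ : N%:R * a <= _).
    by rewrite ler_wpM2r // ltW.
  by rewrite -mulrA ler_wpM2l // ler_peMl // ltW.
have [s Hs] := all_err eps rk wf NL.
have p1 : 1 < ptar by rewrite -Hs.
have : ln (ptar^-1) < 0.
  by apply: ln_lt0; rewrite invr_gt0 p0 /= invf_lt1.
move=> hn; apply: le_trans NDa.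
by rewrite mulr_ge0_le0 // ltW.
Qed.
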